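(* Let $S$ be a statement in Yul source syntax (expressions count as statements), $G$ a global environment, $L$ a local state and $\mathcal{N}$ a namespace, and let $S_{ret}$ range over $v \mid \langle\vec v\rangle \mid \mathbb{M}$ (a value, a tuple of values, or a mode). If $\langle S \mid G; L; \mathcal{N}\rangle \Downarrow \langle S_{ret} \mid G'; L'; \mathcal{N}'\rangle$ then $\langle S \mid G; L; \mathcal{N}\rangle \to^* \langle S_{ret} \mid G'; L'; \mathcal{N}'\rangle$.
   Context: Yul syntax. Fix (dialect-specific) values $u,v,c$, variables $x,y,z,f$, and opcodes $op$. Expressions: $M ::= f(M_1,\dots,M_n) \mid op(M_1,\dots,M_n) \mid x \mid v$. Statements: $S ::= \{S^*\} \mid \mathsf{function}\ f(\vec y) \to \vec z\ \{S^*\} \mid \mathsf{let}\ \vec x := M \mid \vec x := M \mid M \mid \mathsf{if}\ M\ \{S^*\} \mid \mathsf{switch}\ M\ (\mathsf{case}\ c_i\ \{S^*\})^*\ \mathsf{default}\ \{S^*\} \mid \mathsf{for}\ \{S^*\}\ M\ \{S^*\}\ \{S^*\} \mid \mathsf{break} \mid \mathsf{continue} \mid \mathsf{leave}$ (for-loop parts: init block, condition, post-iteration $S_p$, body $S_b$). These are the source-syntax statements. The dialect supplies $\mathsf{true}/\mathsf{false}$ predicates on values, external irregular modes $\mathcal{M}$, and an opcode relation $\langle op(v_1..v_n)\mid G\rangle\Downarrow_{\mathsf{opc}}\langle S'\mid G'\rangle$ ($G,G'$ global environments, $S'$ a tuple of values or external mode). Runtime syntax adds: modes $\mathbb{M}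 ::= \mathsf{regular}\mid\mathsf{break}\mid\mathsf{continue}\mid\mathsf{leave}\mid\mathcal{M}$; scoped blocks $\{S_1,..,S_n\}^{\mathcal{N}}_L$; catchers $\mathsf{Brk}[S]$, $\mathsf{Cnt}[S]$; call frames $\mathsf{Frame}^{\vec z}_L[S]$; tuples $\langle v_1..v_m\rangle$ with $\langle v\rangle=v$, $\langle\rangle=\mathsf{regular}$. Configurations $\langle S\mid G;L;\mathcal{N}\rangle$: $L$ finite map variables to values, $\mathcal{N}$ finite map function names to $(\vec y,\vec z,S_b)$. $L_1\upharpoonright L$: restriction to $\mathrm{dom}(L)$; $\uplus$ disjoint union; $\mathrm{funs}(\{S_1..S_n\})$ maps each function defined directly among the $S_i$ to its (parameters, returns, body); for $\mathcal{N}(f)=((y_1..y_n),(z_1..z_m),S_b)$, $L_f=\{y_i\mapsto v_i\}\uplus\{z_j\mapsto 0\}$. Big-step relations $\Downarrow$ (statements), $\Downarrow_{\mathsf{seq}}$ (sequences), $\Downarrow_{\mathsf{exp}}$ (expressions); in the claim, $\Downarrow$ on an expression means $\Downarrow_{\mathsf{exp}}$. Rules: (Block) if $\langle S_1,..,S_n\mid G;L;\mathcal{N}\uplus\mathcal{N}_1\rangle\Downarrow_{\mathsf{seq}}\langle\mathbb{M}\mid G_1;L_1;\mathcal{N}\uplus\mathcal{N}_1\rangle$ with $\mathcal{N}_1=\mathrm{funs}(\{S_1..S_n\})$ then $\langle\{S_1..S_n\}\mid G;L;\mathcal{N}\rangle\Downarrow\langle\mathbb{M}\mid G_1;L_1\upharpoonright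 L;\mathcal{N}\rangle$. (SeqEmpty) empty sequence $\Downarrow_{\mathsf{seq}}\mathsf{regular}$, unchanged. (SeqReg) $S_1\Downarrow\mathsf{regular}$ from $(G,L)$ to $(G_1,L_1)$ and $\vec S\Downarrow_{\mathsf{seq}}\mathbb{M}$ from $(G_1,L_1)$ to $(G_2,L_2)$ give $S_1,\vec S\Downarrow_{\mathsf{seq}}\mathbb{M}$ to $(G_2,L_2)$. (SeqIrreg) $S_1\Downarrow\mathbb{M}\in\{\mathsf{break},\mathsf{continue},\mathsf{leave}\}$ to $(G_1,L_1)$ gives $S_1,\vec S\Downarrow_{\mathsf{seq}}\mathbb{M}$ to $(G_1,L_1)$. (FunDef) function definitions $\Downarrow\mathsf{regular}$, unchanged. (Decl) if $M\Downarrow_{\mathsf{exp}}\langle\vec v\rangle$ from $(G,L)$ to $(G_1,L_1)$ and $\vec x\notin\mathrm{dom}(L)$ then $\mathsf{let}\ \vec x:=M\Downarrow\mathsf{regular}$ to $(G_1,L_1[\vec x\mapsto\vec v])$; assignment same with $\vec x\in\mathrm{dom}(L)$. (IfF) $M\Downarrow_{\mathsf{exp}}\mathsf{false}$ to $(G_0,L_0)$ gives $\mathsf{if}\ M\ S\Downarrow\mathsf{regular}$ to $(G_0,L_0)$. (IfT) $M\Downarrow_{\mathsf{exp}}\mathsf{true}$ to $(G_0,L_0)$ and $S\Downarrow\mathbb{M}$ to $(G_1,L_1)$ give $\mathsf{if}\ M\ S\Downarrow\mathbb{M}$ to $(G_1,L_1)$. (Switch) with cases $\mathsf{case}\ c_i\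 S_i$: if $M\Downarrow_{\mathsf{exp}}v\notin\{c_1..c_n\}$ evaluate $S_d$; if $M\Downarrow_{\mathsf{exp}}c_k$ with $c_k\notin\{c_1..c_{k-1}\}$ evaluate $S_k$; result is the branch's. (ForInit) for $n>0$, $\mathsf{for}\ \{S_1..S_n\}\ M\ S_p\ S_b$ evaluates as $\{S_1..S_n\ \mathsf{for}\ \{\}\ M\ S_p\ S_b\}$. For $W=\mathsf{for}\ \{\}\ M\ S_p\ S_b$: (ForFalse) $M\Downarrow_{\mathsf{exp}}\mathsf{false}$ to $(G_1,L_1)$ gives $W\Downarrow\mathsf{regular}$ to $(G_1,L_1)$; (ForHalt1) $M$ true to $(G_1,L_1)$, $S_b\Downarrow\mathbb{M}_1$ to $(G_2,L_2)$ with $(\mathbb{M}_1,\mathbb{M}_2)\in\{(\mathsf{leave},\mathsf{leave}),(\mathsf{break},\mathsf{regular})\}$ give $W\Downarrow\mathbb{M}_2$ to $(G_2,L_2)$; (ForHalt2) $M$ true, $S_b\Downarrow\{\mathsf{regular}\text{ or }\mathsf{continue}\}$, $S_p\Downarrow\mathsf{leave}$ to $(G_3,L_3)$ give $W\Downarrow\mathsf{leave}$ to $(G_3,L_3)$; (ForLoop) $M$ true, $S_b\Downarrow\{\mathsf{regular}\text{ or }\mathsf{continue}\}$, $S_p\Downarrow\mathsf{regular}$ to $(G_3,L_3)$, and $W\Downarrow\mathbb{M}$ from $(G_3,L_3)$ to $(G_4,L_4)$ give $W\Downarrow\mathbb{M}$ to $(G_4,L_4)$. (Ident) $x\Downarrow_{\mathsf{exp}}L(x)$,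 unchanged. (FunCall) evaluate arguments right to left, $\langle M_n\mid G;L;\mathcal{N}\rangle\Downarrow_{\mathsf{exp}}\langle v_n\mid G_1;L_1;\mathcal{N}\rangle$, …, $\langle M_1\mid G_{n-1};L_{n-1};\mathcal{N}\rangle\Downarrow_{\mathsf{exp}}\langle v_1\mid G_n;L_n;\mathcal{N}\rangle$; if $\langle S_b\mid G_n;L_f;\mathcal{N}\rangle\Downarrow\langle\mathbb{M}\mid G'';L';\mathcal{N}\rangle$ then $\langle f(M_1..M_n)\mid G;L;\mathcal{N}\rangle\Downarrow_{\mathsf{exp}}\langle\langle L'(z_1)..L'(z_m)\rangle\mid G'';L_n;\mathcal{N}\rangle$. (OpcCall) same argument evaluation, and if $\langle op(v_1..v_n)\mid G_n\rangle\Downarrow_{\mathsf{opc}}\langle v'_1..v'_m\mid G''\rangle$ the result is $\langle\langle v'_1..v'_m\rangle\mid G'';L_n;\mathcal{N}\rangle$. Small-step: contexts $E ::= [\,]\mid\{E,\vec S\}^{\mathcal{N}}_L\mid\mathsf{let}\ \vec x:=E\mid\vec x:=E\mid E_e\mid\mathsf{Cnt}[E]\mid\mathsf{Brk}[E]\mid\mathsf{if}\ E_e\ \{S^*\}\mid\mathsf{switch}\ E_e\dots$, $E_e ::= [\,]\mid f(\vec M,E_e,\vec v)\mid op(\vec M,E_e,\vec v)\mid\mathsf{Frame}^{\vec x}_L[E]$. Base rules ($G$ unchanged except opcodes): $\langle\{S_1..S_n\}\mid L;\mathcal{N}\rangle\to\langle\{S_1,..,S_n\}^{\mathcal{N}}_L\mid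 L;\mathcal{N}\uplus\mathrm{funs}(\{S_1..S_n\})\rangle$ ($n>0$); $\{\}\to\mathsf{regular}$; $\{\mathsf{regular},\vec S\}^{\mathcal{N}}_L\to\{\vec S\}^{\mathcal{N}}_L$ ($\vec S$ nonempty); $\langle\{\mathsf{regular}\}^{\mathcal{N}}_L\mid L_1;\mathcal{N}_1\rangle\to\langle\mathsf{regular}\mid L_1\upharpoonright L;\mathcal{N}\rangle$; $\langle\{\mathbb{M},\vec S\}^{\mathcal{N}}_L\mid L_1;\mathcal{N}_1\rangle\to\langle\mathbb{M}\mid L_1\upharpoonright L;\mathcal{N}\rangle$ for $\mathbb{M}\in\{\mathsf{break},\mathsf{continue},\mathsf{leave}\}$; function definition $\to\mathsf{regular}$; $\langle\mathsf{let}\ \vec x:=\langle\vec v\rangle\mid L\rangle\to\langle\mathsf{regular}\mid L[\vec x\mapsto\vec v]\rangle$ if $\vec x\notin\mathrm{dom}(L)$, assignment with $\vec x\in\mathrm{dom}(L)$; $\mathsf{if}\ \mathsf{false}\ S\to\mathsf{regular}$; $\mathsf{if}\ \mathsf{true}\ S\to S$; $\mathsf{switch}\ v\dots\to S_d$ ($v\notin\{c_i\}$), $\mathsf{switch}\ c_k\dots\to S_k$ ($c_k\notin\{c_1..c_{k-1}\}$); $\mathsf{for}\ \{S_1..S_n\}\ M\ S_p\ S_b\to\{S_1..S_n\ \mathsf{for}\ \{\}\ M\ S_p\ S_b\}$ ($n>0$); $\mathsf{for}\ \{\}\ M\ S_p\ S_b\to\mathsf{Brk}[\mathsf{if}\ M\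 \{\mathsf{Cnt}[S_b]\ S_p\ \mathsf{for}\ \{\}\ M\ S_p\ S_b\}]$; $\mathsf{Cnt}[\mathbb{M}]\to\mathbb{M}$ ($\mathbb{M}\in\{\mathsf{regular},\mathsf{break},\mathsf{leave}\}$), $\mathsf{Cnt}[\mathsf{continue}]\to\mathsf{regular}$; $\mathsf{Brk}[\mathbb{M}]\to\mathbb{M}$ ($\mathbb{M}\in\{\mathsf{regular},\mathsf{leave}\}$), $\mathsf{Brk}[\mathsf{break}]\to\mathsf{regular}$; $x\to L(x)$; $\langle f(\vec v)\mid L;\mathcal{N}\rangle\to\langle\mathsf{Frame}^{\vec z}_L[S_b]\mid L_f;\mathcal{N}\rangle$; $\langle\mathsf{Frame}^{z_1..z_m}_L[\mathbb{M}]\mid L';\mathcal{N}\rangle\to\langle\langle L'(z_1)..L'(z_m)\rangle\mid L;\mathcal{N}\rangle$ ($\mathbb{M}\in\{\mathsf{leave},\mathsf{regular}\}$); $\langle op(\vec v)\mid G;L;\mathcal{N}\rangle\to\langle S'\mid G';L;\mathcal{N}\rangle$ if $\langle op(\vec v)\mid G\rangle\Downarrow_{\mathsf{opc}}\langle S'\mid G'\rangle$. Top-level: $\langle E[S]\mid G;L;\mathcal{N}\rangle\to\langle E[S']\mid G';L';\mathcal{N}'\rangle$ whenever $\langle S\mid G;L;\mathcal{N}\rangle\to\langle S'\mid G';L';\mathcal{N}'\rangle$; and $\langle E[\mathcal{M}]\mid G;L;\mathcal{N}\rangle\to\langle\mathcal{M}\mid G';L';\mathcal{N}'\rangle$. $\to^*$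 is reflexive-transitive closure. *)

(* Defs.v *)
From Stdlib Require Import String List.
Import ListNotations.
Set Implicit Arguments.

(** A Yul dialect: values, global environments, external irregular modes,
    opcodes, the true/false predicates on values, the value 0 (used to
    initialise return variables) and the opcode relation
    <op(v1..vn) | G> ⇓opc <S' | G'> where S' is a tuple of values (inl)
    or an external mode (inr). *)
Record dialect := Dialect {
  val : Type;
  gstate : Type;
  extmode : Type;
  opname : Type;
  vtrue : val -> Prop;
  vfalse : val -> Prop;
  vzero : val;
  opc : opname -> list val -> gstate -> (list val + extmode) -> gstate -> Prop
}.

Section Yul.
Variable D : dialect.

Definition var := string.
Definition locals := var -> option (val D).

Inductive mode :=
| MRegular | MBreak | MContinue | MLeave | MExt (e : extmode D).

(** Runtime syntax (source syntax is the fragment singled out by [is_source]).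
    The statements break/continue/leave are the modes MBreak/MContinue/MLeave. *)
Inductive term :=
| TVal (v : val D)
| TVar (x : var)
| TCall (f : var) (args : list term)
| TOp (o : opname D) (args : list term)
| TBlock (ss : list term)
| TFunDef (f : var) (ys zs : list var) (body : list term)
| TLet (xs : list var) (e : term)
| TAssign (xs : list var) (e : term)
| TIf (c : term) (body : list term)
| TSwitch (e : term) (cases : list (val D * list term)) (dflt : list term)
| TFor (init : list term) (c : term) (post body : list term)
| TMode (m : mode)
| TScope (ss : list term) (N : var -> option (list var * list var * term)) (L : locals)
| TCnt (t : term)
| TBrk (t : term)
| TFrame (zs : list var) (L : locals) (t : term)
| TTuple (vs : list (val D)).

(** namespaces: function names -> (parameters, returns, body) *)
Definition ns := var -> option (list var * list var * term).

Definition tup (vs : list (val D)) : term :=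
  match vs with
  | [] => TMode MRegular
  | [v] => TVal v
  | _ => TTuple vs
  end.

Definition src_mode (m : mode) : bool :=
  match m with MBreak | MContinue | MLeave => true | _ => false end.

Fixpoint is_source (t : term) : bool :=
  match t with
  | TVal _ | TVar _ => true
  | TCall _ args => forallb is_source args
  | TOp _ args => forallb is_source args
  | TBlock ss => forallb is_source ss
  | TFunDef _ _ _ body => forallb is_source body
  | TLet _ e | TAssign _ e => is_source e
  | TIf c body => is_source c && forallb is_source body
  | TSwitch e cases dflt =>
      is_source e && forallb (fun c => forallb is_source (snd c)) cases
      && forallb is_source dflt
  | TFor init c post body =>
      forallb is_source init && is_source c && forallb is_source post
      && forallb is_source body
  | TMode m => src_mode m
  | _ => false
  end.

Definition is_ret (t : term) : Prop :=
  (exists v, t = TVal v) \/ (exists vs, t = tup vs) \/ (exists m, t = TMode m).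

Definition restrict (L1 L : locals) : locals :=
  fun x => match L x with Some _ => L1 x | None => None end.

Definition ns_union (N N1 : ns) : ns :=
  fun f => match N1 f with Some d => Some d | None => N f end.

Definition ns_disj (N N1 : ns) : Prop := forall f, N f = None \/ N1 f = None.

Definition empty_locals : locals := fun _ => None.

Fixpoint funs (ss : list term) : ns :=
  match ss with
  | [] => fun _ => None
  | TFunDef f ys zs b :: ss' =>
      fun g => if String.eqb g f then Some (ys, zs, TBlock b) else funs ss' g
  | _ :: ss' => funs ss'
  end.

Fixpoint upd (L : locals) (xs : list var) (vs : list (val D)) : locals :=
  match xs, vs with
  | x :: xs', v :: vs' => upd (fun y => if String.eqb y x then Some v else L y) xs' vs'
  | _, _ => L
  end.

Definition mkLf (ys : list var) (vs : list (val D)) (zs : list var) : locals :=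
  upd (upd empty_locals ys vs) zs (repeat (vzero D) (length zs)).

Fixpoint lookup_all (L : locals) (zs : list var) : option (list (val D)) :=
  match zs with
  | [] => Some []
  | z :: zs' =>
      match L z, lookup_all L zs' with
      | Some v, Some ws => Some (v :: ws)
      | _, _ => None
      end
  end.

Definition opres_term (r : list (val D) + extmode D) : term :=
  match r with inl vs => tup vs | inr e => TMode (MExt e) end.

Definition irreg (m : mode) : Prop := m = MBreak \/ m = MContinue \/ m = MLeave.

Inductive bstep : term -> gstate D -> locals -> ns -> term -> gstate D -> locals -> ns -> Prop :=
| B_Block : forall ss G L N m G1 L1,
    ns_disj N (funs ss) ->
    bseq ss G L (ns_union N (funs ss)) m G1 L1 ->
    bstep (TBlock ss) G L N (TMode m) G1 (restrict L1 L) N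
| B_FunDef : forall f ys zs b G L N,
    bstep (TFunDef f ys zs b) G L N (TMode MRegular) G L N
| B_Decl : forall xs M vs G L N G1 L1,
    bstep M G L N (tup vs) G1 L1 N ->
    length xs = length vs ->
    (forall x, In x xs -> L x = None) ->
    bstep (TLet xs M) G L N (TMode MRegular) G1 (upd L1 xs vs) N
| B_Assign : forall xs M vs G L N G1 L1,
    bstep M G L N (tup vs) G1 L1 N ->
    length xs = length vs ->
    (forall x, In x xs -> L x <> None) ->
    bstep (TAssign xs M) G L N (TMode MRegular) G1 (upd L1 xs vs) N
| B_IfF : forall M body v G L N G0 L0,
    bstep M G L N (TVal v) G0 L0 N -> vfalse D v ->
    bstep (TIf M body) G L N (TMode MRegular) G0 L0 N
| B_IfT : forall M body v m G L N G0 L0 G1 L1,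
    bstep M G L N (TVal v) G0 L0 N -> vtrue D v ->
    bstep (TBlock body) G0 L0 N (TMode m) G1 L1 N ->
    bstep (TIf M body) G L N (TMode m) G1 L1 N
| B_SwitchD : forall M cases dflt v R G L N G0 L0 G1 L1,
    bstep M G L N (TVal v) G0 L0 N ->
    ~ In v (map fst cases) ->
    bstep (TBlock dflt) G0 L0 N R G1 L1 N ->
    bstep (TSwitch M cases dflt) G L N R G1 L1 N
| B_SwitchC : forall M cases pre c body post dflt R G L N G0 L0 G1 L1,
    cases = pre ++ (c, body) :: post ->
    ~ In c (map fst pre) ->
    bstep M G L N (TVal c) G0 L0 N ->
    bstep (TBlock body) G0 L0 N R G1 L1 N ->
    bstep (TSwitch M cases dflt) G L N R G1 L1 N
| B_ForInit : forall init M Sp Sb R G L N G1 L1 N1,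
    init <> [] ->
    bstep (TBlock (init ++ [TFor [] M Sp Sb])) G L N R G1 L1 N1 ->
    bstep (TFor init M Sp Sb) G L N R G1 L1 N1
| B_ForFalse : forall M Sp Sb v G L N G1 L1,
    bstep M G L N (TVal v) G1 L1 N -> vfalse D v ->
    bstep (TFor [] M Sp Sb) G L N (TMode MRegular) G1 L1 N
| B_ForHalt1 : forall M Sp Sb v m1 m2 G L N G1 L1 G2 L2,
    bstep M G L N (TVal v) G1 L1 N -> vtrue D v ->
    bstep (TBlock Sb) G1 L1 N (TMode m1) G2 L2 N ->
    ((m1 = MLeave /\ m2 = MLeave) \/ (m1 = MBreak /\ m2 = MRegular)) ->
    bstep (TFor [] M Sp Sb) G L N (TMode m2) G2 L2 N
| B_ForHalt2 : forall M Sp Sb v m1 G L N G1 L1 G2 L2 G3 L3,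
    bstep M G L N (TVal v) G1 L1 N -> vtrue D v ->
    bstep (TBlock Sb) G1 L1 N (TMode m1) G2 L2 N ->
    (m1 = MRegular \/ m1 = MContinue) ->
    bstep (TBlock Sp) G2 L2 N (TMode MLeave) G3 L3 N ->
    bstep (TFor [] M Sp Sb) G L N (TMode MLeave) G3 L3 N
| B_ForLoop : forall M Sp Sb v m1 m G L N G1 L1 G2 L2 G3 L3 G4 L4,
    bstep M G L N (TVal v) G1 L1 N -> vtrue D v ->
    bstep (TBlock Sb) G1 L1 N (TMode m1) G2 L2 N ->
    (m1 = MRegular \/ m1 = MContinue) ->
    bstep (TBlock Sp) G2 L2 N (TMode MRegular) G3 L3 N ->
    bstep (TFor [] M Sp Sb) G3 L3 N (TMode m) G4 L4 N ->
    bstep (TFor [] M Sp Sb) G L N (TMode m) G4 L4 N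
| B_Ident : forall x v G L N,
    L x = Some v ->
    bstep (TVar x) G L N (TVal v) G L N
| B_Val : forall v G L N,
    bstep (TVal v) G L N (TVal v) G L N
| B_Mode : forall m G L N,
    bstep (TMode m) G L N (TMode m) G L N
| B_FunCall : forall f Ms vs ys zs Sb m ws G L N Gn Ln G'' L',
    bargs Ms G L N vs Gn Ln ->
    N f = Some (ys, zs, Sb) ->
    length vs = length ys ->
    NoDup (ys ++ zs) ->
    bstep Sb Gn (mkLf ys vs zs) N (TMode m) G'' L' N ->
    (m = MRegular \/ m = MLeave) ->
    lookup_all L' zs = Some ws ->
    bstep (TCall f Ms) G L N (tup ws) G'' Ln N
| B_OpcCall : forall o Ms vs ws G L N Gn Ln G'',
    bargs Ms G L N vs Gn Ln ->
    opc D o vs Gn (inl ws) G'' ->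
    bstep (TOp o Ms) G L N (tup ws) G'' Ln N
with bseq : list term -> gstate D -> locals -> ns -> mode -> gstate D -> locals -> Prop :=
| Seq_Empty : forall G L N, bseq [] G L N MRegular G L
| Seq_Reg : forall S1 Ss m G L N G1 L1 G2 L2,
    bstep S1 G L N (TMode MRegular) G1 L1 N ->
    bseq Ss G1 L1 N m G2 L2 ->
    bseq (S1 :: Ss) G L N m G2 L2
| Seq_Irreg : forall S1 Ss m G L N G1 L1,
    irreg m ->
    bstep S1 G L N (TMode m) G1 L1 N ->
    bseq (S1 :: Ss) G L N m G1 L1
(* arguments M1..Mn are evaluated right to left: Mn first, M1 last *)
with bargs : list term -> gstate D -> locals -> ns -> list (val D) -> gstate D -> locals -> Prop :=
| Args_Nil : forall G L N, bargs [] G L N [] G L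
| Args_Cons : forall M Ms v vs G L N G1 L1 G2 L2,
    bargs Ms G L N vs G1 L1 ->
    bstep M G1 L1 N (TVal v) G2 L2 N ->
    bargs (M :: Ms) G L N (v :: vs) G2 L2.

Inductive ectx :=
| EHole
| ECall (f : var) (Ms : list term) (E : ectx) (vs : list (val D))
| EOp (o : opname D) (Ms : list term) (E : ectx) (vs : list (val D))
| EFrame (zs : list var) (L : locals) (E : ctx)
with ctx :=
| CE (E : ectx)
| CScope (E : ctx) (ss : list term) (N : ns) (L : locals)
| CLet (xs : list var) (E : ctx)
| CAssign (xs : list var) (E : ctx)
| CCnt (E : ctx)
| CBrk (E : ctx)
| CIf (E : ectx) (body : list term)
| CSwitch (E : ectx) (cases : list (val D * list term)) (dflt : list term).

Fixpoint eplug (E : ectx) (t : term) : term :=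
  match E with
  | EHole => t
  | ECall f Ms E' vs => TCall f (Ms ++ eplug E' t :: map TVal vs)
  | EOp o Ms E' vs => TOp o (Ms ++ eplug E' t :: map TVal vs)
  | EFrame zs L E' => TFrame zs L (cplug E' t)
  end
with cplug (E : ctx) (t : term) : term :=
  match E with
  | CE E' => eplug E' t
  | CScope E' ss N L => TScope (cplug E' t :: ss) N L
  | CLet xs E' => TLet xs (cplug E' t)
  | CAssign xs E' => TAssign xs (cplug E' t)
  | CCnt E' => TCnt (cplug E' t)
  | CBrk E' => TBrk (cplug E' t)
  | CIf E' body => TIf (eplug E' t) body
  | CSwitch E' cases dflt => TSwitch (eplug E' t) cases dflt
  end.

Inductive base : term -> gstate D -> locals -> ns -> term -> gstate D -> locals -> ns -> Prop :=
| R_BlockEnter : forall ss G L N,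
    ss <> [] -> ns_disj N (funs ss) ->
    base (TBlock ss) G L N (TScope ss N L) G L (ns_union N (funs ss))
| R_BlockEmpty : forall G L N,
    base (TBlock []) G L N (TMode MRegular) G L N
| R_ScopeReg : forall ss N0 L0 G L N,
    ss <> [] ->
    base (TScope (TMode MRegular :: ss) N0 L0) G L N (TScope ss N0 L0) G L N
| R_ScopeEnd : forall N0 L0 G L1 N1,
    base (TScope [TMode MRegular] N0 L0) G L1 N1 (TMode MRegular) G (restrict L1 L0) N0
| R_ScopeIrreg : forall m ss N0 L0 G L1 N1,
    irreg m ->
    base (TScope (TMode m :: ss) N0 L0) G L1 N1 (TMode m) G (restrict L1 L0) N0
| R_FunDef : forall f ys zs b G L N,
    base (TFunDef f ys zs b) G L N (TMode MRegular) G L N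
| R_Let : forall xs vs G L N,
    length xs = length vs ->
    (forall x, In x xs -> L x = None) ->
    base (TLet xs (tup vs)) G L N (TMode MRegular) G (upd L xs vs) N
| R_Assign : forall xs vs G L N,
    length xs = length vs ->
    (forall x, In x xs -> L x <> None) ->
    base (TAssign xs (tup vs)) G L N (TMode MRegular) G (upd L xs vs) N
| R_IfF : forall v body G L N,
    vfalse D v -> base (TIf (TVal v) body) G L N (TMode MRegular) G L N
| R_IfT : forall v body G L N,
    vtrue D v -> base (TIf (TVal v) body) G L N (TBlock body) G L N
| R_SwitchD : forall v cases dflt G L N,
    ~ In v (map fst cases) ->
    base (TSwitch (TVal v) cases dflt) G L N (TBlock dflt) G L N
| R_SwitchC : forall cases pre c body post dflt G L N,
    cases = pre ++ (c, body) :: post ->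
    ~ In c (map fst pre) ->
    base (TSwitch (TVal c) cases dflt) G L N (TBlock body) G L N
| R_ForInit : forall init M Sp Sb G L N,
    init <> [] ->
    base (TFor init M Sp Sb) G L N (TBlock (init ++ [TFor [] M Sp Sb])) G L N
| R_ForUnfold : forall M Sp Sb G L N,
    base (TFor [] M Sp Sb) G L N
         (TBrk (TIf M [TCnt (TBlock Sb); TBlock Sp; TFor [] M Sp Sb])) G L N
| R_Cnt : forall m G L N,
    (m = MRegular \/ m = MBreak \/ m = MLeave) ->
    base (TCnt (TMode m)) G L N (TMode m) G L N
| R_CntC : forall G L N,
    base (TCnt (TMode MContinue)) G L N (TMode MRegular) G L N
| R_Brk : forall m G L N,
    (m = MRegular \/ m = MLeave) ->
    base (TBrk (TMode m)) G L N (TMode m) G L N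
| R_BrkB : forall G L N,
    base (TBrk (TMode MBreak)) G L N (TMode MRegular) G L N
| R_Var : forall x v G L N,
    L x = Some v -> base (TVar x) G L N (TVal v) G L N
| R_Call : forall f vs ys zs Sb G L N,
    N f = Some (ys, zs, Sb) ->
    length vs = length ys ->
    NoDup (ys ++ zs) ->
    base (TCall f (map TVal vs)) G L N (TFrame zs L Sb) G (mkLf ys vs zs) N
| R_Ret : forall zs L0 m ws G L' N,
    (m = MLeave \/ m = MRegular) ->
    lookup_all L' zs = Some ws ->
    base (TFrame zs L0 (TMode m)) G L' N (tup ws) G L0 N
| R_Op : forall o vs r G G' L N,
    opc D o vs G r G' ->
    base (TOp o (map TVal vs)) G L N (opres_term r) G' L N.

Inductive step : term -> gstate D -> locals -> ns -> term -> gstate D -> locals -> ns -> Prop :=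
| S_Ctx : forall E t G L N t' G' L' N',
    base t G L N t' G' L' N' ->
    step (cplug E t) G L N (cplug E t') G' L' N'
| S_Ext : forall E e G L N G' L' N',
    step (cplug E (TMode (MExt e))) G L N (TMode (MExt e)) G' L' N'.

Inductive steps : term -> gstate D -> locals -> ns -> term -> gstate D -> locals -> ns -> Prop :=
| Steps_refl : forall t G L N, steps t G L N t G L N
| Steps_trans : forall t G L N t1 G1 L1 N1 t2 G2 L2 N2,
    step t G L N t1 G1 L1 N1 ->
    steps t1 G1 L1 N1 t2 G2 L2 N2 ->
    steps t G L N t2 G2 L2 N2.

End Yul.

(* Main.v *)
Require Import Defs.
From Stdlib Require Import String List FunctionalExtensionality.
Import ListNotations.

#[local] Arguments MRegular {D}.
#[local] Arguments MBreak {D}.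
#[local] Arguments MContinue {D}.
#[local] Arguments MLeave {D}.
#[local] Arguments EHole {D}.

Record cfg (D : dialect) := Cfg { ct : term D; cg : gstate D; cl : locals D; cn : ns D }.
Arguments Cfg {D}.
Arguments ct {D}. Arguments cg {D}. Arguments cl {D}. Arguments cn {D}.

Inductive rtc {A : Type} (R : A -> A -> Prop) : A -> A -> Prop :=
| rtc_refl : forall x, rtc R x x
| rtc_step : forall x y z, R x y -> rtc R y z -> rtc R x z.

Lemma rtc_trans {A} (R : A -> A -> Prop) x y z : rtc R x y -> rtc R y z -> rtc R x z.
Proof. induction 1; intros; auto. econstructor; eauto. Qed.

Definition pstep {D : dialect} {C : Type} (p : C -> term D -> term D) (c c' : cfg D) : Prop :=
  exists E t0 t0', ct c = p E t0 /\ ct c' = p E t0' /\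
    base t0 (cg c) (cl c) (cn c) t0' (cg c') (cl c') (cn c').

Lemma lift_gen {D : dialect} {C1 C2 : Type} (p1 : C1 -> term D -> term D) (p2 : C2 -> term D -> term D)
  (W : term D -> term D) (w : C1 -> C2) :
  (forall E t, W (p1 E t) = p2 (w E) t) ->
  forall c c', rtc (pstep p1) c c' ->
  rtc (pstep p2) (Cfg (W (ct c)) (cg c) (cl c) (cn c)) (Cfg (W (ct c')) (cg c') (cl c') (cn c')).
Proof.
  intros HW c c' H; induction H.
  - constructor.
  - econstructor; [|exact IHrtc].
    destruct H as (E & t0 & t0' & H1 & H2 & H3).
    exists (w E), t0, t0'. simpl. rewrite H1, H2, !HW. auto.
Qed.

Definition csteps {D : dialect} t G L N t' G' L' N' :=
  rtc (pstep (@cplug D)) (Cfg t G L N) (Cfg t' G' L' N').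
Definition esteps {D : dialect} t G L N t' G' L' N' :=
  rtc (pstep (@eplug D)) (Cfg t G L N) (Cfg t' G' L' N').

Lemma cs_refl {D : dialect} (t : term D) G L N : csteps t G L N t G L N.
Proof. constructor. Qed.
Lemma es_refl {D : dialect} (t : term D) G L N : esteps t G L N t G L N.
Proof. constructor. Qed.
Lemma cs_base {D : dialect} (t : term D) G L N t' G' L' N' :
  base t G L N t' G' L' N' -> csteps t G L N t' G' L' N'.
Proof. intro H. econstructor; [|constructor]. exists (CE EHole), t, t'. simpl. auto. Qed.
Lemma es_base {D : dialect} (t : term D) G L N t' G' L' N' :
  base t G L N t' G' L' N' -> esteps t G L N t' G' L' N'.
Proof. intro H. econstructor; [|constructor]. exists EHole, t, t'. simpl. auto. Qed.
Lemma cs_trans {D : dialect} (t : term D) G L N t1 G1 L1 N1 t2 G2 L2 N2 :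
  csteps t G L N t1 G1 L1 N1 -> csteps t1 G1 L1 N1 t2 G2 L2 N2 -> csteps t G L N t2 G2 L2 N2.
Proof. apply rtc_trans. Qed.
Lemma es_trans {D : dialect} (t : term D) G L N t1 G1 L1 N1 t2 G2 L2 N2 :
  esteps t G L N t1 G1 L1 N1 -> esteps t1 G1 L1 N1 t2 G2 L2 N2 -> esteps t G L N t2 G2 L2 N2.
Proof. apply rtc_trans. Qed.

Lemma lift_cc {D : dialect} (W : term D -> term D) (w : ctx D -> ctx D) :
  (forall E t, W (cplug E t) = cplug (w E) t) ->
  forall t G L N t' G' L' N', csteps t G L N t' G' L' N' -> csteps (W t) G L N (W t') G' L' N'.
Proof. intros HW t G L N t' G' L' N' H. exact (lift_gen _ _ W w HW _ _ H). Qed.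
Lemma lift_ec {D : dialect} (W : term D -> term D) (w : ectx D -> ctx D) :
  (forall E t, W (eplug E t) = cplug (w E) t) ->
  forall t G L N t' G' L' N', esteps t G L N t' G' L' N' -> csteps (W t) G L N (W t') G' L' N'.
Proof. intros HW t G L N t' G' L' N' H. exact (lift_gen _ _ W w HW _ _ H). Qed.
Lemma lift_ee {D : dialect} (W : term D -> term D) (w : ectx D -> ectx D) :
  (forall E t, W (eplug E t) = eplug (w E) t) ->
  forall t G L N t' G' L' N', esteps t G L N t' G' L' N' -> esteps (W t) G L N (W t') G' L' N'.
Proof. intros HW t G L N t' G' L' N' H. exact (lift_gen _ _ W w HW _ _ H). Qed.
Lemma lift_ce {D : dialect} (W : term D -> term D) (w : ctx D -> ectx D) :
  (forall E t, W (cplug E t) = eplug (w E) t) ->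
  forall t G L N t' G' L' N', csteps t G L N t' G' L' N' -> esteps (W t) G L N (W t') G' L' N'.
Proof. intros HW t G L N t' G' L' N' H. exact (lift_gen _ _ W w HW _ _ H). Qed.
Lemma es_cs {D : dialect} (t : term D) G L N t' G' L' N' :
  esteps t G L N t' G' L' N' -> csteps t G L N t' G' L' N'.
Proof. apply (lift_ec (fun t => t) (@CE D)). reflexivity. Qed.

Lemma cs_steps {D : dialect} (t : term D) G L N t' G' L' N' :
  csteps t G L N t' G' L' N' -> steps t G L N t' G' L' N'.
Proof.
  unfold csteps. intro H.
  change (steps (ct (Cfg t G L N)) (cg (Cfg t G L N)) (cl (Cfg t G L N)) (cn (Cfg t G L N))
    (ct (Cfg t' G' L' N')) (cg (Cfg t' G' L' N')) (cl (Cfg t' G' L' N')) (cn (Cfg t' G' L' N'))).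
  induction H as [c|c c1 c2 Hs _ IH].
  - destruct c; constructor.
  - destruct Hs as (E & t0 & t0' & H1 & H2 & H3).
    econstructor; [|exact IH]. rewrite H1, H2. constructor. exact H3.
Qed.

Definition is_expr {D : dialect} (t : term D) : Prop :=
  match t with @TVal _ _ | @TVar _ _ | @TCall _ _ _ | @TOp _ _ _ => True | _ => False end.
Definition is_dp {D : dialect} (t : term D) : Prop :=
  match t with @TVal _ _ | @TVar _ _ | @TCall _ _ _ | @TOp _ _ _ | @TBlock _ _ | @TFor _ _ _ _ _ => True | _ => False end.
Definition dom_sub {D : dialect} (L' L : locals D) := forall x, L x = None -> L' x = None.
Definition grows {D : dialect} (L L' : locals D) := forall x, L x <> None -> L' x <> None.

Lemma block_mode {D : dialect} ss G L N (R : term D) G' L' N' :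
  bstep (TBlock ss) G L N R G' L' N' -> exists m, R = TMode m.
Proof. intro H; inversion H; subst; eauto. Qed.

Lemma nonmode_expr {D : dialect} (S : term D) G L N R G' L' N' :
  bstep S G L N R G' L' N' -> (forall m, R <> TMode m) -> is_expr S.
Proof.
  intros H Hn; destruct H; simpl; auto; try (exfalso; eapply Hn; reflexivity).
  all: match goal with H : bstep (@TBlock _ _) _ _ _ _ _ _ _ |- _ =>
    apply block_mode in H; destruct H as [m' Hm]; subst; exfalso; eapply Hn; reflexivity end.
Qed.

Lemma upd_notin {D : dialect} xs : forall (L : locals D) vs x, ~ In x xs -> upd L xs vs x = L x.
Proof.
  induction xs as [|y xs IH]; intros L vs x Hx; destruct vs; simpl; auto.
  rewrite IH by (intro; apply Hx; right; auto).
  destruct (String.eqb_spec x y); auto. subst; exfalso; apply Hx; left; auto.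
Qed.

Lemma upd_grow {D : dialect} xs : forall (L : locals D) vs x, L x <> None -> upd L xs vs x <> None.
Proof.
  induction xs as [|y xs IH]; intros L vs x Hx; destruct vs; simpl; auto.
  apply IH. destruct (String.eqb x y); congruence.
Qed.

Lemma tup_mode {D : dialect} (vs : list (val D)) m : tup D vs = TMode m -> vs = [].
Proof. destruct vs as [|? [|? ?]]; simpl; congruence. Qed.

Lemma restrict_id {D : dialect} (L1 L : locals D) : dom_sub L1 L -> restrict L1 L = L1.
Proof.
  intro H; extensionality x; unfold restrict. specialize (H x).
  destruct (L x); auto. symmetry; auto.
Qed.

Lemma ns_union_none {D : dialect} (N : ns D) : ns_union N (fun _ => None) = N.
Proof. extensionality f; reflexivity. Qed.

Scheme bstep_mut := Induction for bstep Sort Prop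
with bseq_mut := Induction for bseq Sort Prop
with bargs_mut := Induction for bargs Sort Prop.

Definition Pb {D : dialect} (S : term D) G L N R G' L' N' : Prop :=
  csteps S G L N R G' L' N' /\ (is_expr S -> esteps S G L N R G' L' N') /\
  (is_dp S -> dom_sub L' L) /\ grows L L' /\
  (forall M Sp Sb, S = TFor [] M Sp Sb -> R = TMode MRegular \/ R = TMode MLeave).
Definition Qs {D : dialect} (ss : list (term D)) G L N m G1 L1 : Prop :=
  (ss <> [] -> forall N0 L0, csteps (TScope ss N0 L0) G L N (TMode m) G1 (restrict L1 L0) N0)
  /\ grows L L1.
Definition Aa {D : dialect} (Ms : list (term D)) G L N vs Gn Ln : Prop :=
  (forall f pre ws, esteps (TCall f (pre ++ Ms ++ map (TVal D) ws)) G L N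
                           (TCall f (pre ++ map (TVal D) (vs ++ ws))) Gn Ln N) /\
  (forall o pre ws, esteps (TOp o (pre ++ Ms ++ map (TVal D) ws)) G L N
                           (TOp o (pre ++ map (TVal D) (vs ++ ws))) Gn Ln N) /\
  dom_sub Ln L /\ grows L Ln.


Lemma expr_dp {D : dialect} (t : term D) : is_expr t -> is_dp t.
Proof. destruct t; simpl; tauto. Qed.

Lemma val_expr {D : dialect} (M : term D) G L N v G' L' N' :
  bstep M G L N (TVal D v) G' L' N' -> is_expr M.
Proof. intro H; eapply nonmode_expr; [exact H| intros m Hm; discriminate Hm]. Qed.

Arguments val_expr {D M G L N v G' L' N'} _.
Arguments restrict_id {D L1 L} _.
Ltac liftc W w H := exact (lift_cc W w (fun _ _ => eq_refl) _ _ _ _ _ _ _ _ H).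
Ltac lifte W w H := exact (lift_ec W w (fun _ _ => eq_refl) _ _ _ _ _ _ _ _ H).
Ltac noFor := let Heq := fresh in intros ? ? ? Heq; discriminate Heq.

Lemma for_enter {D : dialect} (M : term D) Sp Sb G L N v G1 L1 :
  esteps M G L N (TVal D v) G1 L1 N -> vtrue D v ->
  csteps (TFor [] M Sp Sb) G L N
    (TBrk (TScope [TCnt (TBlock Sb); TBlock Sp; TFor [] M Sp Sb] N L1)) G1 L1 N.
Proof.
  intros HM Hv.
  eapply cs_trans. apply cs_base, R_ForUnfold.
  eapply cs_trans. lifte (fun t : term D => TBrk (TIf t [TCnt (TBlock Sb); TBlock Sp; TFor [] M Sp Sb]))
     (fun E : _ D => CBrk (CIf E [TCnt (TBlock Sb); TBlock Sp; TFor [] M Sp Sb])) HM.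
  eapply cs_trans. liftc (fun t : term D => TBrk t) (@CBrk D) (cs_base _ _ _ _ _ _ _ _ (R_IfT _ [TCnt (TBlock Sb); TBlock Sp; TFor [] M Sp Sb] G1 L1 N Hv)).
  assert (Hd : ns_disj N (funs [TCnt (TBlock Sb); TBlock Sp; TFor [] M Sp Sb])) by (unfold ns_disj; intro f; right; reflexivity).
  assert (Hne : [TCnt (TBlock Sb); TBlock Sp; TFor [] M Sp Sb] <> []) by discriminate.
  pose proof (R_BlockEnter G1 L1 Hne Hd) as HB.
  assert (Hf : ns_union N (funs [TCnt (TBlock Sb); TBlock Sp; TFor [] M Sp Sb]) = N)
    by (apply functional_extensionality; reflexivity).
  rewrite Hf in HB.
  liftc (fun t : term D => TBrk t) (@CBrk D) (cs_base _ _ _ _ _ _ _ _ HB).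
Qed.
Lemma main (D : dialect) : forall S G L N R G' L' N',
  bstep S G L N R G' L' N' -> @Pb D S G L N R G' L' N'.
Proof.
  apply (bstep_mut D (fun S G L N R G' L' N' _ => Pb S G L N R G' L' N')
                     (fun ss G L N m G1 L1 _ => Qs ss G L N m G1 L1)
                     (fun Ms G L N vs Gn Ln _ => Aa Ms G L N vs Gn Ln));
  unfold Pb, Qs, Aa; intros.

  -
    destruct H as [Hs Hg]. repeat split.
    + destruct ss as [|s ss'].
      * inversion b; subst. rewrite restrict_id by (intros x Hx; exact Hx).
        apply cs_base, R_BlockEmpty.
      * eapply cs_trans. apply cs_base. apply R_BlockEnter; [discriminate| exact n].
        apply Hs. discriminate.
    + intros [].
    + intros _ x Hx. unfold restrict. rewrite Hx. reflexivity.
    + intros x Hx. unfold restrict. destruct (L x) eqn:E; [apply Hg; rewrite E; discriminate | congruence].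
    + noFor.
  -
    repeat split; [apply cs_base; constructor | intros [] | intros [] | intros x Hx; exact Hx | noFor].
  -
    destruct H as [Hc [He [Hd [Hg Hf]]]]. repeat split.
    + eapply cs_trans. liftc (fun t : term D => TLet xs t) (fun E : _ D => CLet xs E) Hc.
      apply cs_base. apply R_Let; auto. intros x Hx.
      destruct vs as [|v0 vs'].
      { destruct xs; [destruct Hx| discriminate e]. }
      assert (HM : is_expr M) by (eapply nonmode_expr; [exact b| intros m0 Hm0; destruct vs'; discriminate Hm0]).
      apply Hd; [apply expr_dp; exact HM| apply e0; exact Hx].
    + intros [].
    + intros [].
    + intros x Hx. apply upd_grow. apply Hg. exact Hx.
    + noFor.
  -
    destruct H as [Hc [He [Hd [Hg Hf]]]]. repeat split.
    + eapply cs_trans. liftc (fun t : term D => TAssign xs t) (fun E : _ D => CAssign xs E) Hc.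
      apply cs_base. apply R_Assign; auto.
    + intros [].
    + intros [].
    + intros x Hx. apply upd_grow. apply Hg. exact Hx.
    + noFor.
  -
    destruct H as [Hc [He [Hd [Hg Hf]]]]. pose proof (val_expr b) as HM. repeat split.
    + eapply cs_trans. lifte (fun t : term D => TIf t body) (fun E : _ D => CIf E body) (He HM).
      apply cs_base. apply R_IfF. exact v0.
    + intros [].
    + intros [].
    + exact Hg.
    + noFor.
  -
    destruct H as [Hc [He [Hd [Hg Hf]]]]. pose proof (val_expr b) as HM.
    destruct H0 as [Hc0 [_ [_ [Hg0 _]]]]. repeat split.
    + eapply cs_trans. lifte (fun t : term D => TIf t body) (fun E : _ D => CIf E body) (He HM).
      eapply cs_trans. apply cs_base. apply R_IfT. exact v0. exact Hc0.
    + intros [].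
    + intros [].
    + intros x Hx. apply Hg0, Hg, Hx.
    + noFor.
  -
    destruct H as [Hc [He [Hd [Hg Hf]]]]. pose proof (val_expr b) as HM.
    destruct H0 as [Hc0 [_ [_ [Hg0 _]]]]. repeat split.
    + eapply cs_trans. lifte (fun t : term D => TSwitch t cases dflt) (fun E : _ D => CSwitch E cases dflt) (He HM).
      eapply cs_trans. apply cs_base. apply R_SwitchD. exact n. exact Hc0.
    + intros [].
    + intros [].
    + intros x Hx. apply Hg0, Hg, Hx.
    + noFor.
  -
    destruct H as [Hc [He [Hd [Hg Hf]]]]. pose proof (val_expr b) as HM.
    destruct H0 as [Hc0 [_ [_ [Hg0 _]]]]. repeat split.
    + eapply cs_trans. lifte (fun t : term D => TSwitch t cases dflt) (fun E : _ D => CSwitch E cases dflt) (He HM).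
      eapply cs_trans. apply cs_base. eapply R_SwitchC; eauto. exact Hc0.
    + intros [].
    + intros [].
    + intros x Hx. apply Hg0, Hg, Hx.
    + noFor.
  -
    destruct H as [Hc [He [Hd [Hg Hf]]]]. repeat split.
    + eapply cs_trans. apply cs_base. apply R_ForInit. exact n. exact Hc.
    + intros [].
    + intros _. apply Hd. exact I.
    + exact Hg.
    + intros ? ? ? Heq. injection Heq; intros; subst. congruence.
  -
    destruct H as [Hc [He [Hd [Hg Hf]]]]. pose proof (val_expr b) as HM. repeat split.
    + eapply cs_trans. apply cs_base, R_ForUnfold.
      eapply cs_trans. lifte (fun t : term D => TBrk (TIf t [TCnt (TBlock Sb); TBlock Sp; TFor [] M Sp Sb]))
        (fun E : _ D => CBrk (CIf E [TCnt (TBlock Sb); TBlock Sp; TFor [] M Sp Sb])) (He HM).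
      eapply cs_trans. liftc (fun t : term D => TBrk t) (@CBrk D) (cs_base _ _ _ _ _ _ _ _ (R_IfF _ [TCnt (TBlock Sb); TBlock Sp; TFor [] M Sp Sb] G1 L1 N v0)).
      apply cs_base. apply R_Brk. left; reflexivity.
    + intros [].
    + intros _. apply Hd, expr_dp, HM.
    + exact Hg.
    + intros; left; reflexivity.
  -
    destruct H as [Hc [He [Hd [Hg Hf]]]]. pose proof (val_expr b) as HM.
    destruct H0 as [Hc0 [_ [Hd0 [Hg0 _]]]].
    assert (Hs1 : dom_sub L2 L1) by (apply Hd0; exact I).
    repeat split.
    + eapply cs_trans. apply (for_enter M Sp Sb G L N v G1 L1 (He HM) v0).
      eapply cs_trans. liftc (fun t : term D => TBrk (TScope [TCnt t; TBlock Sp; TFor [] M Sp Sb] N L1))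
        (fun E : _ D => CBrk (CScope (CCnt E) [TBlock Sp; TFor [] M Sp Sb] N L1)) Hc0.
      eapply cs_trans. liftc (fun t : term D => TBrk (TScope [t; TBlock Sp; TFor [] M Sp Sb] N L1))
        (fun E : _ D => CBrk (CScope E [TBlock Sp; TFor [] M Sp Sb] N L1))
        (cs_base _ _ _ _ _ _ _ _ (R_Cnt (m:=m1) G2 L2 N ltac:(destruct o as [[-> _]|[-> _]]; auto))).
      eapply cs_trans. liftc (fun t : term D => TBrk t) (@CBrk D)
        (cs_base _ _ _ _ _ _ _ _ (R_ScopeIrreg (m:=m1) [TBlock Sp; TFor [] M Sp Sb] N L1 G2 L2 N
           ltac:(unfold irreg; destruct o as [[-> _]|[-> _]]; auto))).
      rewrite (restrict_id Hs1).
      destruct o as [[-> ->]|[-> ->]].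
      * apply cs_base. apply R_Brk. right; reflexivity.
      * apply cs_base. apply R_BrkB.
    + intros [].
    + intros _ x Hx. apply Hs1, Hd, Hx. apply expr_dp, HM.
    + intros x Hx. apply Hg0, Hg, Hx.
    + intros; destruct o as [[_ ->]|[_ ->]]; auto.
  -
    destruct H as [Hc [He [Hd [Hg Hf]]]]. pose proof (val_expr b) as HM.
    destruct H0 as [Hc0 [_ [Hd0 [Hg0 _]]]].
    destruct H1 as [Hc1 [_ [Hd1 [Hg1 _]]]].
    assert (Hs1 : dom_sub L2 L1) by (apply Hd0; exact I).
    assert (Hs2 : dom_sub L3 L2) by (apply Hd1; exact I).
    repeat split.
    + eapply cs_trans. apply (for_enter M Sp Sb G L N v G1 L1 (He HM) v0).
      eapply cs_trans. liftc (fun t : term D => TBrk (TScope [TCnt t; TBlock Sp; TFor [] M Sp Sb] N L1))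
        (fun E : _ D => CBrk (CScope (CCnt E) [TBlock Sp; TFor [] M Sp Sb] N L1)) Hc0.
      eapply cs_trans. liftc (fun t : term D => TBrk (TScope [t; TBlock Sp; TFor [] M Sp Sb] N L1))
        (fun E : _ D => CBrk (CScope E [TBlock Sp; TFor [] M Sp Sb] N L1))
        (cs_base _ _ _ _ _ _ _ _ (ltac:(destruct o as [-> | ->]; [apply R_Cnt; auto| apply R_CntC])
           : base (TCnt (TMode m1)) G2 L2 N (TMode MRegular) G2 L2 N)).
      eapply cs_trans. liftc (fun t : term D => TBrk t) (@CBrk D)
        (cs_base _ _ _ _ _ _ _ _ (R_ScopeReg N L1 G2 L2 N (ss := [TBlock Sp; TFor [] M Sp Sb]) ltac:(discriminate))).
      eapply cs_trans. liftc (fun t : term D => TBrk (TScope [t; TFor [] M Sp Sb] N L1))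
        (fun E : _ D => CBrk (CScope E [TFor [] M Sp Sb] N L1)) Hc1.
      eapply cs_trans. liftc (fun t : term D => TBrk t) (@CBrk D)
        (cs_base _ _ _ _ _ _ _ _ (R_ScopeIrreg (m:=MLeave) [TFor [] M Sp Sb] N L1 G3 L3 N
           ltac:(unfold irreg; auto))).
      assert (Hs : dom_sub L3 L1) by (intros x Hx; apply Hs2, Hs1, Hx).
      rewrite (restrict_id Hs).
      apply cs_base. apply R_Brk. right; reflexivity.
    + intros [].
    + intros _ x Hx. apply Hs2, Hs1, Hd, Hx. apply expr_dp, HM.
    + intros x Hx. apply Hg1, Hg0, Hg, Hx.
    + intros; auto.
  -
    destruct H as [Hc [He [Hd [Hg Hf]]]]. pose proof (val_expr b) as HM.
    destruct H0 as [Hc0 [_ [Hd0 [Hg0 _]]]].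
    destruct H1 as [Hc1 [_ [Hd1 [Hg1 _]]]].
    destruct H2 as [Hc2 [_ [Hd2 [Hg2 Hf2]]]].
    assert (Hs1 : dom_sub L2 L1) by (apply Hd0; exact I).
    assert (Hs2 : dom_sub L3 L2) by (apply Hd1; exact I).
    assert (Hs3 : dom_sub L4 L3) by (apply Hd2; exact I).
    assert (Hm : TMode m = TMode MRegular \/ TMode m = TMode MLeave) by (eapply Hf2; reflexivity).
    repeat split.
    + eapply cs_trans. apply (for_enter M Sp Sb G L N v G1 L1 (He HM) v0).
      eapply cs_trans. liftc (fun t : term D => TBrk (TScope [TCnt t; TBlock Sp; TFor [] M Sp Sb] N L1))
        (fun E : _ D => CBrk (CScope (CCnt E) [TBlock Sp; TFor [] M Sp Sb] N L1)) Hc0.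
      eapply cs_trans. liftc (fun t : term D => TBrk (TScope [t; TBlock Sp; TFor [] M Sp Sb] N L1))
        (fun E : _ D => CBrk (CScope E [TBlock Sp; TFor [] M Sp Sb] N L1))
        (cs_base _ _ _ _ _ _ _ _ (ltac:(destruct o as [-> | ->]; [apply R_Cnt; auto| apply R_CntC])
           : base (TCnt (TMode m1)) G2 L2 N (TMode MRegular) G2 L2 N)).
      eapply cs_trans. liftc (fun t : term D => TBrk t) (@CBrk D)
        (cs_base _ _ _ _ _ _ _ _ (R_ScopeReg N L1 G2 L2 N (ss := [TBlock Sp; TFor [] M Sp Sb]) ltac:(discriminate))).
      eapply cs_trans. liftc (fun t : term D => TBrk (TScope [t; TFor [] M Sp Sb] N L1))
        (fun E : _ D => CBrk (CScope E [TFor [] M Sp Sb] N L1)) Hc1.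
      eapply cs_trans. liftc (fun t : term D => TBrk t) (@CBrk D)
        (cs_base _ _ _ _ _ _ _ _ (R_ScopeReg N L1 G3 L3 N (ss := [TFor [] M Sp Sb]) ltac:(discriminate))).
      eapply cs_trans. liftc (fun t : term D => TBrk (TScope [t] N L1))
        (fun E : _ D => CBrk (CScope E [] N L1)) Hc2.
      assert (Hs : dom_sub L4 L1) by (intros x Hx; apply Hs3, Hs2, Hs1, Hx).
      destruct Hm as [Hm|Hm]; injection Hm as ->.
      * eapply cs_trans. liftc (fun t : term D => TBrk t) (@CBrk D)
          (cs_base _ _ _ _ _ _ _ _ (R_ScopeEnd N L1 G4 L4 N)).
        rewrite (restrict_id Hs).
        apply cs_base. apply R_Brk. auto.
      * eapply cs_trans. liftc (fun t : term D => TBrk t) (@CBrk D)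
          (cs_base _ _ _ _ _ _ _ _ (R_ScopeIrreg (m:=MLeave) [] N L1 G4 L4 N ltac:(unfold irreg; auto))).
        rewrite (restrict_id Hs).
        apply cs_base. apply R_Brk. auto.
    + intros [].
    + intros _ x Hx. apply Hs3, Hs2, Hs1, Hd, Hx. apply expr_dp, HM.
    + intros x Hx. apply Hg2, Hg1, Hg0, Hg, Hx.
    + intros; exact Hm.
  -
    repeat split.
    + apply cs_base. apply R_Var. exact e.
    + intros _. apply es_base. apply R_Var. exact e.
    + intros _ y Hx; exact Hx.
    + intros y Hx; exact Hx.
    + noFor.
  -
    repeat split; [apply cs_refl| intros; apply es_refl| intros _ x Hx; exact Hx| intros x Hx; exact Hx| noFor].
  -
    repeat split; [apply cs_refl| intros; apply es_refl| intros _ x Hx; exact Hx| intros x Hx; exact Hx| noFor].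
  -
    destruct H as [Ha [_ [Hd Hg]]]. destruct H0 as [Hc0 _].
    assert (Hes : esteps (TCall f Ms) G L N (tup D ws) G'' Ln N).
    { pose proof (Ha f [] []) as Ha'. simpl in Ha'. rewrite !app_nil_r in Ha'.
      eapply es_trans. exact Ha'.
      eapply es_trans. apply es_base. eapply R_Call; eauto.
      eapply es_trans. exact (lift_ce (fun t : term D => TFrame zs Ln t) (fun E : _ D => EFrame zs Ln E) (fun _ _ => eq_refl) _ _ _ _ _ _ _ _ Hc0).
      apply es_base. apply R_Ret; auto. destruct o; auto. }
    repeat split.
    + apply es_cs, Hes.
    + intros _; exact Hes.
    + intros _; exact Hd.
    + exact Hg.
    + noFor.
  -
    destruct H as [_ [Ha [Hd Hg]]].
    assert (Hes : esteps (TOp o Ms) G L N (tup D ws) G'' Ln N).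
    { pose proof (Ha o [] []) as Ha'. simpl in Ha'. rewrite !app_nil_r in Ha'.
      eapply es_trans. exact Ha'.
      apply es_base. exact (R_Op o vs (inl ws) Gn G'' Ln N o0). }
    repeat split.
    + apply es_cs, Hes.
    + intros _; exact Hes.
    + intros _; exact Hd.
    + exact Hg.
    + noFor.
  -
    split; [intros Hne; congruence | intros x Hx; exact Hx].
  -
    destruct H as [Hc [_ [_ [Hg _]]]]. destruct H0 as [Hs Hg0]. split.
    + intros _ N0 L0. destruct Ss as [|s Ss'].
      * inversion b0; subst.
        eapply cs_trans. liftc (fun t : term D => TScope [t] N0 L0) (fun E : _ D => CScope E [] N0 L0) Hc.
        apply cs_base, R_ScopeEnd.
      * eapply cs_trans. liftc (fun t : term D => TScope (t :: s :: Ss') N0 L0) (fun E : _ D => CScope E (s :: Ss') N0 L0) Hc.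
        eapply cs_trans. apply cs_base, R_ScopeReg; discriminate.
        apply Hs. discriminate.
    + intros x Hx. apply Hg0, Hg, Hx.
  -
    destruct H as [Hc [_ [_ [Hg _]]]]. split.
    + intros _ N0 L0.
      eapply cs_trans. liftc (fun t : term D => TScope (t :: Ss) N0 L0) (fun E : _ D => CScope E Ss N0 L0) Hc.
      apply cs_base, R_ScopeIrreg; exact i.
    + exact Hg.
  -
    repeat split; [intros; simpl; apply es_refl | intros; simpl; apply es_refl | intros x Hx; exact Hx | intros x Hx; exact Hx].
  -
    destruct H as [Hca [Hoa [Hd Hg]]]. destruct H0 as [_ [He [Hd0 [Hg0 _]]]].
    pose proof (val_expr b0) as HM.
    repeat split.
    + intros f pre ws. eapply es_trans.
      { pose proof (Hca f (pre ++ [M]) ws) as e. rewrite <- !app_assoc in e. simpl in e. exact e. }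
      exact (lift_ee (fun t : term D => TCall f (pre ++ t :: map (TVal D) (vs ++ ws))) (fun E : _ D => ECall f pre E (vs ++ ws)) (fun _ _ => eq_refl) _ _ _ _ _ _ _ _ (He HM)).
    + intros o pre ws. eapply es_trans.
      { pose proof (Hoa o (pre ++ [M]) ws) as e. rewrite <- !app_assoc in e. simpl in e. exact e. }
      exact (lift_ee (fun t : term D => TOp o (pre ++ t :: map (TVal D) (vs ++ ws))) (fun E : _ D => EOp o pre E (vs ++ ws)) (fun _ _ => eq_refl) _ _ _ _ _ _ _ _ (He HM)).
    + intros x Hx. apply Hd0, Hd, Hx. apply expr_dp, HM.
    + intros x Hx. apply Hg0, Hg, Hx.
Qed.


Theorem lemma6 (D : dialect) (S : term D) (G : gstate D) (L : locals D) (N : ns D)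
    (Sret : term D) (G' : gstate D) (L' : locals D) (N' : ns D) :
  is_source S = true ->
  is_ret Sret ->
  bstep S G L N Sret G' L' N' ->
  steps S G L N Sret G' L' N'.
Proof.
  intros _ _ H. apply cs_steps. exact (proj1 (main D _ _ _ _ _ _ _ _ H)).
Qed.
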